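(* Let $(\Phi,D)$ be a domain-free information algebra whose lattice $D$ has a top element. Then $(\Phi,D)$ is continuous (resp. s-continuous) if and only if there exists a set $\Upsilon\subseteq\Phi$ containing the empty information $e$ such that: (convergency) every directed subset $X\subseteq\Upsilon$ has a supremum $\vee X$; and (D2) for every $\phi\in\Phi$, the set $\{\psi\in\Upsilon:\psi\ll\phi\}$ is directed and $\phi=\vee\{\psi\in\Upsilon:\psi\ll\phi\}$ (resp. (SD2) for every $\phi\in\Phi$ and $x\in D$, the set $\{\psi\in\Upsilon:\psi=\psi^{\Rightarrow x}\ll\phi\}$ is directed and $\phi^{\Rightarrow x}=\vee\{\psi\in\Upsilon:\psi=\psi^{\Rightarrow x}\ll\phi\}$).
   Context: A domain-free information algebra $(\Phi,D)$ consists of a set $\Phi$, a lattice $D$, a combination $\otimes:\Phi\times\Phi\to\Phi$ and a focusing $\Phi\times D\to\Phi$, $(\psi,x)\mapsto\psi^{\Rightarrow x}$, such that: (1) $\otimes$ is associative and commutative and has a neutral element $e$ (the empty information); (2) $(\psi^{\Rightarrow y})^{\Rightarrow x}=\psi^{\Rightarrow x\wedge y}$; (3) $(\phi^{\Rightarrow x}\otimes\psi)^{\Rightarrow x}=\phi^{\Rightarrow x}\otimes\psi^{\Rightarrow x}$; (4) for every $\psi$ there is $x\in D$ with $\psi^{\Rightarrow x}=\psi$; (5) $\psi\otimes\psi^{\Rightarrow x}=\psi$. $\Phi$ is partially ordered by $\psi\le\phi$ iff $\psi\otimes\phi=\phi$; suprema $\vee$ are with respect to this order. $a\ll b$ ($a$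 way-below $b$) means: for every directed set $X$ with $b\le\vee X$ there is $c\in X$ with $a\le c$. $(\Phi,D)$ (with $D$ having a top element) is called continuous (resp. s-continuous) if there exists a basis $\Gamma\subseteq\Phi$, closed under combination and containing $e$, such that every directed $X\subseteq\Gamma$ has a supremum in $\Phi$, and $\phi=\vee\{\psi\in\Gamma:\psi\ll\phi\}$ for all $\phi\in\Phi$ (resp. $\phi^{\Rightarrow x}=\vee\{\psi\in\Gamma:\psi=\psi^{\Rightarrow x}\ll\phi\}$ for all $\phi\in\Phi$, $x\in D$). *)

(* Defs.v *)
From HB Require Import structures.
From mathcomp Require Import all_boot all_order.
Set Implicit Arguments. Unset Strict Implicit. Unset Printing Implicit Defensive.
Import Order.TTheory.
Local Open Scope order_scope.

Section InfoAlgebra.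
Variables (disp : Order.disp_t) (D : tLatticeType disp) (Phi : Type).
Variables (comb : Phi -> Phi -> Phi) (e : Phi) (foc : Phi -> D -> Phi).

Record is_info_algebra : Prop := {
  comb_assoc : forall a b c, comb a (comb b c) = comb (comb a b) c;
  comb_comm  : forall a b, comb a b = comb b a;
  comb_neutral : forall a, comb e a = a;
  foc_transitive : forall psi (x y : D), foc (foc psi y) x = foc psi (x `&` y);
  foc_combination : forall phi psi (x : D),
      foc (comb (foc phi x) psi) x = comb (foc phi x) (foc psi x);
  foc_support : forall psi, exists x : D, foc psi x = psi;
  foc_idempotence : forall psi (x : D), comb psi (foc psi x) = psi
}.

Definition ia_le (psi phi : Phi) : Prop := comb psi phi = phi.

Definition is_upper (X : Phi -> Prop) (s : Phi) : Prop :=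
  forall a, X a -> ia_le a s.

Definition is_sup (X : Phi -> Prop) (s : Phi) : Prop :=
  is_upper X s /\ forall u, is_upper X u -> ia_le s u.

Definition directed (X : Phi -> Prop) : Prop :=
  (exists a, X a) /\
  forall a b, X a -> X b -> exists c, X c /\ ia_le a c /\ ia_le b c.

Definition way_below (a b : Phi) : Prop :=
  forall X : Phi -> Prop, directed X ->
    forall s, is_sup X s -> ia_le b s -> exists c, X c /\ ia_le a c.

Definition continuous_ia : Prop :=
  exists Gamma : Phi -> Prop,
    Gamma e /\ (forall a b, Gamma a -> Gamma b -> Gamma (comb a b)) /\
    (forall X, (forall a, X a -> Gamma a) -> directed X -> exists s, is_sup X s) /\
    (forall phi, is_sup (fun psi => Gamma psi /\ way_below psi phi) phi).

Definition s_continuous_ia : Prop :=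
  exists Gamma : Phi -> Prop,
    Gamma e /\ (forall a b, Gamma a -> Gamma b -> Gamma (comb a b)) /\
    (forall X, (forall a, X a -> Gamma a) -> directed X -> exists s, is_sup X s) /\
    (forall phi (x : D),
        is_sup (fun psi => Gamma psi /\ psi = foc psi x /\ way_below psi phi)
               (foc phi x)).

End InfoAlgebra.

(* Main.v *)
Require Import Defs.
From mathcomp Require Import all_boot all_order.
Import Order.TTheory.
Set Implicit Arguments.

Section Aux.
Variables (disp : Order.disp_t) (D : tLatticeType disp) (Phi : Type).
Variables (comb : Phi -> Phi -> Phi) (e : Phi) (foc : Phi -> D -> Phi).
Hypothesis H : is_info_algebra comb e foc.

Let cA := comb_assoc H.
Let cC := comb_comm H.
Let cN := comb_neutral H.
Let fT := foc_transitive H.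
Let fC := foc_combination H.
Let fS := foc_support H.
Let fI := foc_idempotence H.

Local Notation le := (ia_le comb).
Local Notation wb := (way_below comb).

Lemma le_refl a : le a a.
Proof. case: (fS a) => x Hx. have := fI a x. by rewrite Hx. Qed.

Lemma le_e a : le e a.
Proof. exact: cN. Qed.

Lemma le_tr a b c : le a b -> le b c -> le a c.
Proof. rewrite /ia_le => h1 h2. by rewrite -h2 cA h1. Qed.

Lemma le_cl a b : le a (comb a b).
Proof. rewrite /ia_le cA. have := le_refl a. rewrite /ia_le => ->. done. Qed.

Lemma le_cr a b : le b (comb a b).
Proof. rewrite cC; exact: le_cl. Qed.

Lemma le_lub a b c : le a c -> le b c -> le (comb a b) c.
Proof. rewrite /ia_le => h1 h2. by rewrite -cA h2 h1. Qed.

Lemma wb_le a b : wb a b -> le a b.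
Proof.
move=> h.
have d : directed comb (fun z => z = b).
  split; first by exists b.
  move=> x y -> ->; exists b; split=> //; split; exact: le_refl.
have sp : is_sup comb (fun z => z = b) b.
  split; first by move=> z ->; exact: le_refl.
  move=> u hu; exact: hu.
by have [c [-> //]] := h _ d b sp (le_refl b).
Qed.

Lemma wb_mono a b b' : wb a b -> le b b' -> wb a b'.
Proof. move=> h hb X dX s hs hs'. exact: (h X dX s hs (le_tr hb hs')). Qed.

Lemma wb_e b : wb e b.
Proof. move=> X [[c hc] _] s _ _. exists c; split=> //; exact: le_e. Qed.

Lemma wb_comb a b p : wb a p -> wb b p -> wb (comb a b) p.
Proof.
move=> ha hb X dX s hs hp.
have [c1 [h1 l1]] := ha X dX s hs hp.
have [c2 [h2 l2]] := hb X dX s hs hp.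
have [c [hc [l1' l2']]] := dX.2 c1 c2 h1 h2.
exists c; split=> //; apply: le_lub; [exact: le_tr l1 l1' | exact: le_tr l2 l2'].
Qed.

Lemma foc_e x : foc e x = e.
Proof. have := fI e x. by rewrite cN. Qed.

Lemma foc_top p : foc p \top%O = p.
Proof. case: (fS p) => y hy. by rewrite -{1}hy fT meet1x. Qed.

Lemma foc_fix_le psi phi x : psi = foc psi x -> le psi phi -> le psi (foc phi x).
Proof.
rewrite /ia_le => hp hl. rewrite -{2}hl hp fC. by rewrite -hp.
Qed.

Lemma foc_comb_fix a b x : a = foc a x -> b = foc b x -> comb a b = foc (comb a b) x.
Proof. move=> ha hb. by rewrite ha fC -ha -hb. Qed.

Lemma dir_sup (Ups : Phi -> Prop) :
  (forall X, (forall a, X a -> Ups a) -> directed comb X -> exists s, is_sup comb X s) ->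
  (forall phi, exists Y : Phi -> Prop,
      (forall y, Y y -> Ups y /\ wb y phi) /\ directed comb Y /\ is_sup comb Y phi) ->
  forall X, directed comb X -> exists s, is_sup comb X s.
Proof.
move=> hU hY X dX.
pose Y' := fun u => Ups u /\ exists c, X c /\ wb u c.
have [s hs] : exists s, is_sup comb Y' s.
  apply: hU; first by move=> a [].
  split.
  - case: dX.1 => c hc. case: (hY c) => Y [hYs [[[y hy] _] _]].
    have [u w] := hYs y hy. exists y; split=> //; exists c; by split.
  - move=> a b [ua [c1 [x1 w1]]] [ub [c2 [x2 w2]]].
    have [c [hc [l1 l2]]] := dX.2 c1 c2 x1 x2.
    case: (hY c) => Y [hYs [dY sY]].
    have [y1 [hy1 m1]] := wb_mono w1 l1 dY sY (le_refl c).
    have [y2 [hy2 m2]] := wb_mono w2 l2 dY sY (le_refl c).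
    have [y [hy [n1 n2]]] := dY.2 y1 y2 hy1 hy2.
    have [uy wy] := hYs y hy.
    exists y; split; first by split=> //; exists c.
    split; [exact: le_tr m1 n1 | exact: le_tr m2 n2].
exists s; split.
- move=> c hc. case: (hY c) => Y [hYs [dY sY]].
  apply: sY.2 => y hy. apply: hs.1. have [uy wy] := hYs y hy.
  split=> //; exists c; by split.
- move=> u hu. apply: hs.2 => y [_ [c [hc w]]].
  exact: le_tr (wb_le w) (hu c hc).
Qed.

End Aux.

Theorem proposition3p6 (disp : Order.disp_t) (D : tLatticeType disp) (Phi : Type)
    (comb : Phi -> Phi -> Phi) (e : Phi) (foc : Phi -> D -> Phi) :
  is_info_algebra comb e foc ->
  (continuous_ia comb e <->
     exists Ups : Phi -> Prop,
       Ups e /\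
       (forall X, (forall a, X a -> Ups a) -> directed comb X ->
          exists s, is_sup comb X s) /\
       (forall phi,
          directed comb (fun psi => Ups psi /\ way_below comb psi phi) /\
          is_sup comb (fun psi => Ups psi /\ way_below comb psi phi) phi)) /\
  (s_continuous_ia comb e foc <->
     exists Ups : Phi -> Prop,
       Ups e /\
       (forall X, (forall a, X a -> Ups a) -> directed comb X ->
          exists s, is_sup comb X s) /\
       (forall phi (x : D),
          directed comb (fun psi => Ups psi /\ psi = foc psi x /\ way_below comb psi phi) /\
          is_sup comb (fun psi => Ups psi /\ psi = foc psi x /\ way_below comb psi phi)
                 (foc phi x))).
Proof.
move=> H; split; split.
- case=> G [Ge [Gc [Gs Gp]]]. exists G; split=> //; split=> // phi.
  split; last exact: Gp. split; first by exists e; hnf; split; [exact: Ge | exact: (@wb_e _ _ _ _ _ _ H phi)].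
  move=> a b [ga wa] [gb wb']. exists (comb a b); split.
    split; [exact: Gc | exact: (@wb_comb _ _ _ _ _ _ H a b phi)].
  split; [exact: (@le_cl _ _ _ _ _ _ H a b) | exact: (@le_cr _ _ _ _ _ _ H a b)].
- case=> U [Ue [Us Up]]. exists (fun _ => True); split=> //; split=> //; split.
  + move=> X _ dX; apply: (dir_sup H _ Us _ dX) => phi.
    exists (fun psi => U psi /\ way_below comb psi phi).
    split; first by move=> y [].
    exact: Up.
  + move=> phi; split. move=> y [_ w]. exact: (@wb_le _ _ _ _ _ _ H y phi w).
    move=> u hu; apply: (proj2 (proj2 (Up phi)) u) => y [uy wy]; exact: hu.
- case=> G [Ge [Gc [Gs Gp]]]. exists G; split=> //; split=> // phi x.
  split; last exact: Gp. split.
    exists e; split=> //; split; [by rewrite (foc_e H) | exact: (@wb_e _ _ _ _ _ _ H phi)].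
  move=> a b [ga [fa wa]] [gb [fb wb']]. exists (comb a b); split.
    split; [exact: Gc | split; [exact: (@foc_comb_fix _ _ _ _ _ _ H a b x fa fb) | exact: (@wb_comb _ _ _ _ _ _ H a b phi)]].
  split; [exact: (@le_cl _ _ _ _ _ _ H a b) | exact: (@le_cr _ _ _ _ _ _ H a b)].
- case=> U [Ue [Us Up]]. exists (fun _ => True); split=> //; split=> //; split.
  + move=> X _ dX.
    have Us' : forall X, (forall a, X a -> (fun u => U u /\ u = foc u \top%O) a) -> directed comb X -> exists s, is_sup comb X s.
      move=> X' hX'; apply: Us => a /hX' []; done.
    apply: (dir_sup H _ Us' _ dX) => phi.
    exists (fun psi => U psi /\ psi = foc psi \top%O /\ way_below comb psi phi).
    split; first by move=> y [uy [fy wy]].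
    rewrite -{3}(foc_top H phi). exact: Up.
  + move=> phi x; split.
      move=> y [_ [fy wy]]. exact: (@foc_fix_le _ _ _ _ _ _ H y phi x fy (@wb_le _ _ _ _ _ _ H y phi wy)).
    move=> u hu; apply: (proj2 (proj2 (Up phi x)) u) => y [uy [fy wy]]; exact: hu.
Qed.
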